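(* Let $X$ be a finitely supported subset of an invariant set $Z$. (1) If $X$ is FSM Dedekind infinite, then $X$ is FSM Mostowski infinite. (2) If $X$ is FSM Mostowski infinite, then $X$ is FSM Tarski II infinite. The converse of (2) fails: $\wp_{fin}(A)$ is FSM Tarski II infinite but not FSM Mostowski infinite.
   Context: Framework (FSM). Work in ZF with a fixed infinite set $A$ of atoms; $S_A$ is the group of bijections of $A$ fixing all but finitely many atoms; $Fix(S)$ is the set of $\pi\in S_A$ fixing each element of $S\subseteq A$; $S$ supports $x$ if $\pi\cdot x=x$ for all $\pi\in Fix(S)$. An invariant set is an $S_A$-set all of whose elements have finite supports; subsets carry $\pi\star W=\{\pi\cdot w:w\in W\}$; relations on $Z$ are subsets of $Z\times Z$ with the componentwise action. $\wp_{fin}(A)$ is the set of finite subsets of $A$. A function is finitely supported if there is a finite $S$ such that for $\pi\in Fix(S)$, $\pi$ preserves domain and codomain and $f(\pi\cdot x)=\pi\cdot f(x)$. Definitions: $X$ is FSM Dedekind infinite if there is a finitely supported injection from $X$ onto a finitely supported proper subset of $X$. $X$ is FSM Mostowski infinite if there exist an infinite finitely supported subset $Y\subseteq X$ and a total order on $Y$ that is finitely supported as a subset of $Z\times Z$. $X$ is FSM Tarski II infinite if there is a nonempty finitely supported family of finitely supported subsets of $X$ that is totally ordered by inclusion and has no maximal element. *)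

(* Defs.v *)
From mathcomp Require Import all_boot.
From Stdlib Require List.

Set Implicit Arguments.
Unset Strict Implicit.
Unset Printing Implicit Defensive.

(* Atoms: an eqType A (decidable equality, as in ZF classically).
   Infinitude of A is a hypothesis of the main theorem. *)
Definition atoms_infinite (A : eqType) : Prop :=
  forall s : seq A, exists a, a \notin s.

Record fperm (A : eqType) := FPerm {
  fp_fun : A -> A;
  fp_inv : A -> A;
  fp_funK : cancel fp_fun fp_inv;
  fp_invK : cancel fp_inv fp_fun;
  fp_finsupp : exists s : seq A, forall a, a \notin s -> fp_fun a = a
}.

Definition fixes (A : eqType) (pi : fperm A) (S : seq A) : Prop :=
  forall a, a \in S -> fp_fun pi a = a.

(* act is an action of S_A on T (stated pointwise on the underlying maps). *)
Definition is_action (A : eqType) (T : Type) (act : fperm A -> T -> T) : Prop :=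
  (forall pi, (forall a, fp_fun pi a = a) -> forall x, act pi x = x) /\
  (forall pi sigma tau,
      (forall a, fp_fun tau a = fp_fun pi (fp_fun sigma a)) ->
      forall x, act tau x = act pi (act sigma x)).

Definition supports (A : eqType) (T : Type) (act : fperm A -> T -> T)
  (S : seq A) (x : T) : Prop :=
  forall pi, fixes pi S -> act pi x = x.

Definition finsupp (A : eqType) (T : Type) (act : fperm A -> T -> T) (x : T) : Prop :=
  exists S : seq A, supports act S x.

Definition invariant_set (A : eqType) (T : Type) (act : fperm A -> T -> T) : Prop :=
  is_action act /\ forall x, finsupp act x.

Definition setact (A : eqType) (T : Type) (act : fperm A -> T -> T)
  (pi : fperm A) (W : T -> Prop) : T -> Prop :=
  fun t => exists w, W w /\ act pi w = t.

Definition prodact (A : eqType) (T : Type) (act : fperm A -> T -> T)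
  (pi : fperm A) (p : T * T) : T * T := (act pi p.1, act pi p.2).

Definition fs_fun (A : eqType) (T : Type) (act : fperm A -> T -> T)
  (D C : T -> Prop) (f : T -> T) : Prop :=
  exists S : seq A, forall pi, fixes pi S ->
    setact act pi D = D /\ setact act pi C = C /\
    forall x, D x -> f (act pi x) = act pi (f x).

Definition infinite_set (T : Type) (Y : T -> Prop) : Prop :=
  ~ exists l : list T, forall y, Y y -> List.In y l.

Definition total_order_on (T : Type) (Y : T -> Prop) (R : T * T -> Prop) : Prop :=
  (forall p, R p -> Y p.1 /\ Y p.2) /\
  (forall x, Y x -> R (x, x)) /\
  (forall x y, R (x, y) -> R (y, x) -> x = y) /\
  (forall x y z, R (x, y) -> R (y, z) -> R (x, z)) /\
  (forall x y, Y x -> Y y -> R (x, y) \/ R (y, x)).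

Definition subset (T : Type) (U V : T -> Prop) : Prop := forall x, U x -> V x.

Definition FSM_Dedekind_infinite (A : eqType) (T : Type)
  (act : fperm A -> T -> T) (X : T -> Prop) : Prop :=
  exists (f : T -> T) (Y : T -> Prop),
    finsupp (setact act) Y /\ subset Y X /\ (exists x, X x /\ ~ Y x) /\
    (forall x, X x -> Y (f x)) /\
    (forall x x', X x -> X x' -> f x = f x' -> x = x') /\
    (forall y, Y y -> exists x, X x /\ f x = y) /\
    fs_fun act X Y f.

Definition FSM_Mostowski_infinite (A : eqType) (T : Type)
  (act : fperm A -> T -> T) (X : T -> Prop) : Prop :=
  exists (Y : T -> Prop) (R : T * T -> Prop),
    subset Y X /\ infinite_set Y /\ finsupp (setact act) Y /\
    total_order_on Y R /\ finsupp (setact (prodact act)) R.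

Definition FSM_TarskiII_infinite (A : eqType) (T : Type)
  (act : fperm A -> T -> T) (X : T -> Prop) : Prop :=
  exists F : (T -> Prop) -> Prop,
    (exists W, F W) /\
    finsupp (setact (setact act)) F /\
    (forall W, F W -> subset W X /\ finsupp (setact act) W) /\
    (forall W V, F W -> F V -> subset W V \/ subset V W) /\
    (forall W, F W -> exists V, F V /\ subset W V /\ ~ subset V W).

Definition finite_pred (A : eqType) (P : A -> Prop) : Prop :=
  exists s : seq A, forall a, P a -> a \in s.

Definition pfin (A : eqType) : Type := {P : A -> Prop | finite_pred P}.

Definition atomact (A : eqType) (pi : fperm A) (a : A) : A := fp_fun pi a.

Lemma setact_finite (A : eqType) (pi : fperm A) (P : A -> Prop) :
  finite_pred P -> finite_pred (setact (@atomact A) pi P).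
Proof.
move=> [s Hs]; exists (map (fp_fun pi) s) => b [a [Pa <-]].
by apply: map_f; apply: Hs.
Qed.

Definition pfin_act (A : eqType) (pi : fperm A) (P : pfin A) : pfin A :=
  exist _ (setact (@atomact A) pi (proj1_sig P)) (setact_finite pi (proj2_sig P)).

Definition setT_of (T : Type) : T -> Prop := fun _ => True.

(* Main.v *)
Require Import Defs.
From mathcomp Require Import all_boot.
From mathcomp Require Import zify.
From Stdlib Require Import Classical ClassicalEpsilon FunctionalExtensionality PropExtensionality.
From Stdlib Require List.

Set Implicit Arguments.
Unset Strict Implicit.
Unset Printing Implicit Defensive.

Lemma setact_fixed (A : eqType) (T : Type) (act : fperm A -> T -> T) pi (W : T -> Prop) :
  (forall w, W w -> act pi w = w) -> setact act pi W = W.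
Proof.
move=> H; apply: functional_extensionality => t; apply: propositional_extensionality.
split; first by move=> [w [Ww <-]]; rewrite H.
by move=> Wt; exists t; split => //; rewrite H.
Qed.

Lemma inj_not_finite (T : Type) (g : nat -> T) :
  (forall n m, g n = g m -> n = m) -> forall l : list T, exists n, ~ List.In (g n) l.
Proof.
move=> + l; elim: l g => [|a l IH] g ginj; first by exists 0.
case: (classic (exists n, g n = a)) => [[n0 Hn0]|Hno].
- have g'inj : forall n m, g (n + n0.+1) = g (m + n0.+1) -> n = m.
    by move=> n m /ginj; lia.
  have [k Hk] := IH (fun n => g (n + n0.+1)) g'inj.
  exists (k + n0.+1) => /= [[Ha|//]].
  by rewrite -Hn0 in Ha; move/ginj: Ha; lia.
- have [k Hk] := IH g ginj; exists k => /= [[Ha|//]].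
  by apply: Hno; exists k.
Qed.

Lemma ded_most (A : eqType) (Z : Type) (act : fperm A -> Z -> Z) (X : Z -> Prop) :
  invariant_set act -> FSM_Dedekind_infinite act X -> FSM_Mostowski_infinite act X.
Proof.
move=> [Hact Hfs] [f [Y [_ [YX [[x0 [Xx0 nYx0]] [fXY [finj [_ [Sf HSf]]]]]]]]].
have uX : forall n, X (iter n f x0).
  by elim => [|n IH] //=; apply: YX; apply: fXY.
have uinj : forall n m, iter n f x0 = iter m f x0 -> n = m.
  elim => [|n IH] [|m] //=.
  - by move=> H; exfalso; apply: nYx0; rewrite H; apply: fXY; apply: uX.
  - by move=> H; exfalso; apply: nYx0; rewrite -H; apply: fXY; apply: uX.
  - by move=> /finj H; congr S; apply: IH; apply: H; apply: uX.
have [S0 HS0] := Hfs x0.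
have ufix : forall pi, fixes pi (Sf ++ S0) -> forall n, act pi (iter n f x0) = iter n f x0.
  move=> pi Hpi.
  have H1 : fixes pi Sf by move=> a Ha; apply: Hpi; rewrite mem_cat Ha.
  have H2 : fixes pi S0 by move=> a Ha; apply: Hpi; rewrite mem_cat Ha orbT.
  elim => [|n IH]; first by apply: HS0.
  have [_ [_ Heq]] := HSf pi H1.
  by rewrite /= -Heq ?IH //; apply: uX.
exists (fun z => exists n, z = iter n f x0),
  (fun p => exists n m, n <= m /\ p = (iter n f x0, iter m f x0)).
split; first by move=> z [n ->]; apply: uX.
split.
  move=> [l Hl]; have [n Hn] := inj_not_finite uinj l; apply: Hn; apply: Hl; by exists n.
split.
  by exists (Sf ++ S0) => pi Hpi; apply: setact_fixed => w [n ->]; apply: ufix.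
split; last first.
  exists (Sf ++ S0) => pi Hpi; apply: setact_fixed => p [n [m [_ ->]]].
  by rewrite /prodact /= !ufix.
split; first by move=> p [n [m [_ ->]]] /=; split; [exists n|exists m].
split; first by move=> x [n ->]; exists n, n.
split.
  move=> x y [n [m [Hnm [-> ->]]]] [m' [n' [Hmn' [/uinj e1 /uinj e2]]]].
  by have -> : n = m by lia.
split.
  move=> x y z [n [m [Hnm [-> ->]]]] [m' [n' [Hmn' [/uinj e1 ->]]]].
  exists n, n'; split => //; lia.
move=> x y [n ->] [m ->]; case: (leqP n m) => H.
  by left; exists n, m.
by right; exists m, n; split => //; lia.
Qed.

Lemma fp_inj (A : eqType) (pi : fperm A) : injective (fp_fun pi).
Proof. exact: can_inj (@fp_funK _ pi). Qed.

Lemma iter_inj (T : Type) (f : T -> T) n : injective f -> injective (iter n f).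
Proof. by move=> fi; elim: n => [|n IH] x y //= /fi; apply: IH. Qed.

Lemma iter_can (T : Type) (f g : T -> T) n : cancel f g -> cancel (iter n f) (iter n g).
Proof. by move=> fK; elim: n => [|n IH] x //; rewrite iterSr iterS fK IH. Qed.

Lemma iter_supp (A : eqType) (pi : fperm A) n :
  exists s : seq A, forall a, a \notin s -> iter n (fp_fun pi) a = a.
Proof.
have [s Hs] := fp_finsupp pi; exists s => a Ha.
by elim: n => //= n ->; apply: Hs.
Qed.

Definition fpow (A : eqType) (pi : fperm A) n : fperm A :=
  FPerm (iter_can n (@fp_funK _ pi)) (iter_can n (@fp_invK _ pi)) (iter_supp pi n).

Lemma iter_mul (T : Type) (f : T -> T) x p m : iter p f x = x -> iter (m * p) f x = x.
Proof. by move=> H; elim: m => // m IH; rewrite mulSn iterD IH H. Qed.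

Lemma atom_period (A : eqType) (pi : fperm A) (a : A) :
  exists k, 0 < k /\ iter k (fp_fun pi) a = a.
Proof.
have [s Hs] := fp_finsupp pi.
have stab : forall x, x \in a :: s -> fp_fun pi x \in a :: s.
  move=> x Hx; case: (boolP (x \in s)) => xs.
  - case Hfx: (fp_fun pi x \in s); first by rewrite inE Hfx orbT.
    have : fp_fun pi (fp_fun pi x) = fp_fun pi x by apply: Hs; rewrite Hfx.
    by move/fp_inj => e; rewrite e xs in Hfx.
  - by rewrite (Hs x xs).
have iterin : forall n, iter n (fp_fun pi) a \in a :: s.
  by elim => [|n IH]; [rewrite mem_head | rewrite iterS; apply: stab].
apply: NNPP => Hno.
have U : uniq [seq iter i (fp_fun pi) a | i <- iota 0 (size s).+2].
  rewrite map_inj_in_uniq ?iota_uniq // => i j _ _ e.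
  case: (ltngtP i j) => // ij; exfalso; apply: Hno.
  - exists (j - i); split; first by lia.
    apply: (@iter_inj _ _ i (@fp_inj _ pi)).
    by rewrite -iterD subnKC ?e //; apply: ltnW.
  - exists (i - j); split; first by lia.
    apply: (@iter_inj _ _ j (@fp_inj _ pi)).
    by rewrite -iterD subnKC ?e //; apply: ltnW.
have := uniq_leq_size U.
have sub : {subset [seq iter i (fp_fun pi) a | i <- iota 0 (size s).+2] <= a :: s}.
  by move=> x /mapP [i _ ->]; apply: iterin.
by move/(_ _ sub); rewrite size_map size_iota /= ltnn.
Qed.

Lemma list_period (A : eqType) (pi : fperm A) (l : seq A) :
  exists k, 0 < k /\ forall a, a \in l -> iter k (fp_fun pi) a = a.
Proof.
elim: l => [|a l [k [kp Hk]]]; first by exists 1.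
have [ka [kap Hka]] := atom_period pi a.
exists (ka * k); split; first by rewrite muln_gt0 kap kp.
move=> x; rewrite inE => /orP [/eqP -> | xl].
  by rewrite mulnC; apply: iter_mul.
by apply: iter_mul; apply: Hk.
Qed.

Lemma act_iter (A : eqType) T (act : fperm A -> T -> T) : is_action act ->
  forall pi n y, act (fpow pi n) y = iter n (act pi) y.
Proof.
move=> [H1 H2] pi; elim => [|n IH] y; first by apply: H1.
by rewrite iterS -IH; apply: H2.
Qed.

Lemma order_fixed (A : eqType) T (act : fperm A -> T -> T) (Y : T -> Prop)
  (R : T * T -> Prop) pi :
  is_action act ->
  setact act pi Y = Y -> setact (prodact act) pi R = R -> total_order_on Y R ->
  forall y, Y y -> finsupp act y -> act pi y = y.
Proof.
move=> Hact HY HR [RY [Rrefl [Ranti [Rtrans Rtot]]]] y Yy [Sy HSy].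
have Ymap : forall z, Y z -> Y (act pi z) by move=> z Yz; rewrite -HY; exists z.
have Rmap : forall u v, R (u, v) -> R (act pi u, act pi v).
  by move=> u v Ruv; rewrite -HR; exists (u, v).
have [k [kp Hk]] := list_period pi Sy.
have yk : iter k (act pi) y = y by rewrite -act_iter //; apply: HSy => a /Hk.
have uY : forall n, Y (iter n (act pi) y) by elim => //= n IH; apply: Ymap.
case: (Rtot y (act pi y) Yy (Ymap _ Yy)) => H0.
- have step : forall n, R (iter n (act pi) y, iter n.+1 (act pi) y).
    by elim => //= n IH; apply: Rmap.
  have up : forall n, R (act pi y, iter n.+1 (act pi) y).
    elim => [|n IH]; first by apply: Rrefl; apply: Ymap.
    exact: Rtrans IH (step n.+1).
  apply: Ranti => //; have := up k.-1; by rewrite prednK // yk.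
- have step : forall n, R (iter n.+1 (act pi) y, iter n (act pi) y).
    by elim => //= n IH; apply: Rmap.
  have down : forall n, R (iter n.+1 (act pi) y, act pi y).
    elim => [|n IH]; first by apply: Rrefl; apply: Ymap.
    exact: Rtrans (step n.+1) IH.
  apply: Ranti => //; have := down k.-1; by rewrite prednK // yk.
Qed.

Lemma most_tarski (A : eqType) (Z : Type) (act : fperm A -> Z -> Z) (X : Z -> Prop) :
  invariant_set act -> FSM_Mostowski_infinite act X -> FSM_TarskiII_infinite act X.
Proof.
move=> [Hact Hfs] [Y [R [YX [Yinf [[S1 HS1] [Hord [S2 HS2]]]]]]].
have fixY : forall pi, fixes pi (S1 ++ S2) -> forall y, Y y -> act pi y = y.
  move=> pi Hpi y Yy; apply: (order_fixed Hact _ _ Hord) => //.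
  - by apply: HS1 => a Ha; apply: Hpi; rewrite mem_cat Ha.
  - by apply: HS2 => a Ha; apply: Hpi; rewrite mem_cat Ha orbT.
have next : forall l : list Z, {y | Y y /\ ~ List.In y l}.
  move=> l; apply: constructive_indefinite_description.
  apply: NNPP => H; apply: Yinf; exists l => y Yy; apply: NNPP => Hn; apply: H.
  by exists y.
pose nx l := proj1_sig (next l).
pose L n := iter n (fun l => nx l :: l) [::].
pose g n := nx (L n).
have gY : forall n, Y (g n) by move=> n; exact: (proj1 (proj2_sig (next (L n)))).
have gout : forall n, ~ List.In (g n) (L n).
  by move=> n; exact: (proj2 (proj2_sig (next (L n)))).
have gin : forall m n, m < n -> List.In (g m) (L n).
  move=> m; elim => [|n IH] //; rewrite ltnS leq_eqVlt => /orP [/eqP -> | H].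
    by left.
  by right; apply: IH.
have ginj : forall m n, g m = g n -> m = n.
  move=> m n e; case: (ltngtP m n) => // H; exfalso.
  - by apply: (gout n); rewrite -e; apply: gin.
  - by apply: (gout m); rewrite e; apply: gin.
pose W n := fun t => exists k, k < n /\ t = g k.
exists (fun V => exists n, V = W n).
split; first by exists (W 0), 0.
split.
  exists (S1 ++ S2) => pi Hpi; apply: setact_fixed => V [n ->].
  by apply: setact_fixed => t [k [_ ->]]; apply: fixY.
split.
  move=> V [n ->]; split; first by move=> t [k [_ ->]]; apply: YX; apply: gY.
  by exists (S1 ++ S2) => pi Hpi; apply: setact_fixed => t [k [_ ->]]; apply: fixY.
split.
  move=> V V' [n ->] [m ->]; case: (leqP n m) => H; [left|right] => t [k [Hk ->]];
    exists k; split => //; lia.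
move=> V [n ->]; exists (W n.+1); split; first by exists n.+1.
split; first by move=> t [k [Hk ->]]; exists k; split => //; lia.
move=> H; have [k [Hk /ginj e]] := H (g n) (ex_intro _ n (conj (ltnSn n) erefl)).
by subst; rewrite ltnn in Hk.
Qed.

Lemma pfin_eq (A : eqType) (P Q : pfin A) :
  (forall a, proj1_sig P a <-> proj1_sig Q a) -> P = Q.
Proof.
case: P Q => [P HP] [Q HQ] /= H.
have e : P = Q.
  by apply: functional_extensionality => a; apply: propositional_extensionality.
subst; f_equal; apply: proof_irrelevance.
Qed.

Lemma finv_supp (A : eqType) (pi : fperm A) :
  exists s : seq A, forall a, a \notin s -> fp_inv pi a = a.
Proof.
have [s Hs] := fp_finsupp pi; exists s => a Ha.
by rewrite -{1}(Hs a Ha) fp_funK.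
Qed.

Definition finv (A : eqType) (pi : fperm A) : fperm A :=
  FPerm (@fp_invK _ pi) (@fp_funK _ pi) (finv_supp pi).

Definition cardle (A : eqType) n (P : A -> Prop) :=
  exists s : seq A, size s <= n /\ forall a, P a -> a \in s.

Lemma cardle_act (A : eqType) (pi : fperm A) n P :
  cardle n P -> cardle n (setact (@atomact A) pi P).
Proof.
move=> [s [Hs HP]]; exists (map (fp_fun pi) s); rewrite size_map; split => //.
by move=> b [a [Pa <-]]; apply: map_f; apply: HP.
Qed.

Definition Wn (A : eqType) n := fun Q : pfin A => cardle n (proj1_sig Q).

Lemma Wn_fixed (A : eqType) (pi : fperm A) n : setact (@pfin_act A) pi (@Wn A n) = Wn n.
Proof.
apply: functional_extensionality => Q; apply: propositional_extensionality.
split; first by move=> [w [Ww <-]]; exact: cardle_act.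
move=> HQ; exists (pfin_act (finv pi) Q); split; first exact: cardle_act.
apply: pfin_eq => a /=; split.
  by move=> [w [[u [Qu <-]] <-]]; rewrite /atomact /= fp_invK.
move=> Qa; exists (fp_inv pi a); split; last by rewrite /atomact fp_invK.
by exists a.
Qed.

Lemma uniq_seq (A : eqType) : atoms_infinite A -> forall n, exists s : seq A, uniq s /\ size s = n.
Proof.
move=> Ainf; elim => [|n [s [Us Hs]]]; first by exists [::].
have [a Ha] := Ainf s; exists (a :: s); by rewrite /= Ha Us Hs.
Qed.

Lemma pfin_tarski (A : eqType) : atoms_infinite A ->
  FSM_TarskiII_infinite (@pfin_act A) (@setT_of (pfin A)).
Proof.
move=> Ainf; exists (fun V => exists n, V = @Wn A n).
split; first by exists (Wn 0), 0.
split; first by exists [::] => pi _; apply: setact_fixed => V [n ->]; apply: Wn_fixed.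
split; first by move=> V [n ->]; split => //; exists [::] => pi _; apply: Wn_fixed.
split.
  move=> V V' [n ->] [m ->]; case: (leqP n m) => H; [left|right] => Q [s [Hs HP]];
    exists s; split => //; lia.
move=> V [n ->]; exists (Wn n.+1); split; first by exists n.+1.
split; first by move=> Q [s [Hs HP]]; exists s; split => //; lia.
have [s [Us Hs]] := uniq_seq Ainf n.+1.
pose Q := exist (@finite_pred A) (fun a => a \in s) (ex_intro _ s (fun a h => h)) : pfin A.
move=> H; have [|t [Ht Hst]] := H Q.
  by exists s; rewrite Hs.
have := uniq_leq_size Us (fun a h => Hst a h); lia.
Qed.

Definition swapf (A : eqType) (a b x : A) := if x == a then b else if x == b then a else x.

Lemma swapfK (A : eqType) (a b : A) : cancel (swapf a b) (swapf a b).
Proof.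
move=> x; rewrite /swapf.
case: (eqVneq x a) => [->|xa].
  by rewrite eqxx; case: (eqVneq b a) => [->|]; rewrite ?eqxx.
case: (eqVneq x b) => [->|xb]; first by rewrite eqxx.
by rewrite (negbTE xa) (negbTE xb).
Qed.

Lemma swap_supp (A : eqType) (a b : A) :
  exists s : seq A, forall x, x \notin s -> swapf a b x = x.
Proof.
exists [:: a; b] => x; rewrite !inE negb_or => /andP [xa xb].
by rewrite /swapf (negbTE xa) (negbTE xb).
Qed.

Definition swapp (A : eqType) (a b : A) : fperm A :=
  FPerm (swapfK a b) (swapfK a b) (swap_supp a b).

Fixpoint sublists (T : Type) (s : seq T) : seq (seq T) :=
  if s is x :: s' then sublists s' ++ map (cons x) (sublists s') else [:: [::]].

Lemma sublists_ok (A : eqType) (s : seq A) (P : A -> Prop) :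
  (forall a, P a -> a \in s) ->
  exists l, List.In l (sublists s) /\ forall a, P a <-> a \in l.
Proof.
elim: s P => [|x s IH] P HP.
  exists [::]; split; first by left.
  by move=> a; split => // /HP.
have [l [Hl Hla]] : exists l, List.In l (sublists s) /\ forall a, (P a /\ a <> x) <-> a \in l.
  apply: IH => a /= [Pa ax]; have := HP a Pa; rewrite inE.
  by case/orP => // /eqP e; exfalso; apply: ax.
case: (classic (P x)) => Px.
- exists (x :: l); split.
    by apply: List.in_or_app; right; apply: List.in_map.
  move=> a; rewrite inE; split.
    move=> Pa; case: (eqVneq a x) => [//|ax] /=.
    by apply/Hla; split => // e; rewrite e eqxx in ax.
  by case/orP => [/eqP -> // | /Hla []].
- exists l; split; first by apply: List.in_or_app; left.
  move=> a; split; last by move/Hla => [].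
  by move=> Pa; apply/Hla; split => // e; subst.
Qed.

Lemma pfin_action (A : eqType) : is_action (@pfin_act A).
Proof.
split.
- move=> pi Hpi P; apply: pfin_eq => a /=; split.
    by move=> [w [Pw <-]]; rewrite /atomact Hpi.
  by move=> Pa; exists a; split => //; rewrite /atomact Hpi.
- move=> pi sigma tau H P; apply: pfin_eq => a /=; split.
    move=> [w [Pw <-]]; exists (atomact sigma w); split; last by rewrite /atomact H.
    by exists w.
  by move=> [u [[w [Pw <-]] <-]]; exists w; split => //; rewrite /atomact H.
Qed.

Lemma pfin_fs (A : eqType) (P : pfin A) : finsupp (@pfin_act A) P.
Proof.
case: P => [P [s Hs]]; exists s => pi Hpi; apply: pfin_eq => a /=; split.
  by move=> [w [Pw <-]]; rewrite /atomact Hpi ?Hs.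
by move=> Pa; exists a; split => //; rewrite /atomact Hpi ?Hs.
Qed.

Lemma pfin_not_most (A : eqType) : atoms_infinite A ->
  ~ FSM_Mostowski_infinite (@pfin_act A) (@setT_of (pfin A)).
Proof.
move=> Ainf [Y [R [_ [Yinf [[S1 HS1] [Hord [S2 HS2]]]]]]].
have fixY : forall pi, fixes pi (S1 ++ S2) -> forall y, Y y -> pfin_act pi y = y.
  move=> pi Hpi y Yy; apply: (order_fixed (@pfin_action A) _ _ Hord) => //.
  - by apply: HS1 => a Ha; apply: Hpi; rewrite mem_cat Ha.
  - by apply: HS2 => a Ha; apply: Hpi; rewrite mem_cat Ha orbT.
  - exact: pfin_fs.
have subS : forall P, Y P -> forall a, proj1_sig P a -> a \in S1 ++ S2.
  move=> P YP a Pa; case aS: (a \in S1 ++ S2) => //; exfalso.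
  have [sP HsP] := proj2_sig P.
  have [b Hb] := Ainf (a :: (S1 ++ S2) ++ sP).
  move: Hb; rewrite inE mem_cat negb_or => /andP [ba /norP [bS bsP]].
  have Hfix : fixes (swapp a b) (S1 ++ S2).
    move=> x xS /=; rewrite /swapf.
    case: (eqVneq x a) => [e|_]; first by rewrite -e xS in aS.
    case: (eqVneq x b) => [e|_] //; by rewrite -e xS in bS.
  have := fixY _ Hfix P YP; move/(f_equal (fun Q : pfin A => proj1_sig Q b)) => e.
  have : proj1_sig P b.
    rewrite -e /=; exists a; split => //.
    by rewrite /atomact /= /swapf eqxx.
  by move/HsP; rewrite (negbTE bsP).
apply: Yinf.
exists (map (fun l => exist (@finite_pred A) (fun a => a \in l)
          (ex_intro _ l (fun a h => h)) : pfin A) (sublists (S1 ++ S2))).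
move=> y Yy; have [l [Hl Hla]] := sublists_ok (subS y Yy).
have -> : y = exist (@finite_pred A) (fun a => a \in l) (ex_intro _ l (fun a h => h)).
  by apply: pfin_eq.
by apply: List.in_map.
Qed.

Theorem mainTheorem15 (A : eqType) (A_inf : atoms_infinite A) :
  (forall (Z : Type) (act : fperm A -> Z -> Z) (X : Z -> Prop),
      invariant_set act -> finsupp (setact act) X ->
      (FSM_Dedekind_infinite act X -> FSM_Mostowski_infinite act X) /\
      (FSM_Mostowski_infinite act X -> FSM_TarskiII_infinite act X)) /\
  (FSM_TarskiII_infinite (@pfin_act A) (@setT_of (pfin A)) /\
   ~ FSM_Mostowski_infinite (@pfin_act A) (@setT_of (pfin A))).
Proof.
split.
  move=> Z act X Hinv _; split; [exact: ded_most | exact: most_tarski].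
split; [exact: pfin_tarski | exact: pfin_not_most].
Qed.
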